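(* For unknown single-minded bidders in a multi-unit auction with $m$ identical items, the following randomized mechanism obtains a $400$-approximation to the optimal social welfare (its expected welfare under truthful play is at least $\mathrm{OPT}/400$ on every instance). With probability $1/2$, run an ascending-price auction on the grand bundle of all $m$ items. With the remaining probability $1/2$: place each bidder independently in a set $S$ with probability $1/2$ and in $U$ otherwise; bidders in $S$ receive nothing and report their valuations; compute the optimal welfare $O$ achievable by allocating the items among bidders of $S$ only; then iterate over the bidders of $U$ in an arbitrary order, and let each purchase her preferred number of the remaining items at price $O/(10m)$ per item.
   Context: Bidder $i$ is single-minded: there are private $x_i\ge0$ and $d_i\in\{1,\dots,m\}$ with $v_i(q)=x_i$ if $q\ge d_i$ and $v_i(q)=0$ otherwise; utilities are quasi-linear. $\mathrm{OPT}$ is the maximum of $\sum_iv_i(q_i)$ over nonnegative integers with $\sum_iq_i\le m$. In the ascending auction on the grand bundle, the highest-value bidder wins all items. The expectation is over the mechanism's randomness. *)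

(* Defs.v *)
From HB Require Import structures.
From mathcomp Require Import all_boot all_order all_algebra.
Set Implicit Arguments. Unset Strict Implicit. Unset Printing Implicit Defensive.
Import Order.TTheory GRing.Theory Num.Theory.
Local Open Scope ring_scope.

Section Auction.
Variables (R : realFieldType) (n m : nat).
Variables (x : 'I_n -> R) (d : 'I_n -> nat).

Definition sm_val (i : 'I_n) (q : nat) : R := if (d i <= q)%N then x i else 0.

Definition opt_on (A : {set 'I_n}) : R :=
  \big[Num.max/0]_(q : {ffun 'I_n -> 'I_m.+1} | (\sum_(i in A) q i <= m)%N)
     \sum_(i in A) sm_val i (q i).

Definition OPT : R := opt_on setT.

(* ascending auction on the grand bundle: the highest-value bidder for the
   grand bundle wins all m items; welfare = her value for m items *)
Definition grand_bundle_welfare : R := \big[Num.max/0]_(i : 'I_n) sm_val i m.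

Definition price (S : {set 'I_n}) : R := opt_on S / (10 * m%:R).

Fixpoint posted_welfare (choose : 'I_n -> nat -> nat) (U : {set 'I_n})
    (s : seq 'I_n) (r : nat) : R :=
  match s with
  | [::] => 0
  | i :: s' =>
      if i \in U then
        sm_val i (choose i r) + posted_welfare choose U s' (r - choose i r)
      else posted_welfare choose U s' r
  end.

(* [choose] is a truthful (utility-maximizing) purchase rule at price p:
   it never buys more than is available and maximizes
   v_i(q) - q * p among all feasible q <= r (ties arbitrary). *)
Definition preferred_choice (p : R) (choose : 'I_n -> nat -> nat) : Prop :=
  forall i r, (choose i r <= r)%N /\
    forall q, (q <= r)%N ->
      sm_val i q - q%:R * p <= sm_val i (choose i r) - (choose i r)%:R * p.

(* expected welfare of the randomized mechanism: with prob 1/2 grand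
   bundle; with prob 1/2 a uniformly random S (each bidder independently
   w.p. 1/2, i.e. each S has prob 2^-n), then the posted price phase on
   U = ~: S in the order [order S] with purchase rule [choose S]. *)
Definition mech_expected_welfare (order : {set 'I_n} -> seq 'I_n)
    (choose : {set 'I_n} -> 'I_n -> nat -> nat) : R :=
  2^-1 * grand_bundle_welfare +
  2^-1 * \sum_(S : {set 'I_n})
            (2^-1) ^+ n * posted_welfare (choose S) (~: S) (order S) m.

End Auction.

(* Main.v *)
Require Import Defs.
From HB Require Import structures.
From mathcomp Require Import all_boot all_order all_algebra.
From mathcomp Require Import zify ring lra.
Set Implicit Arguments. Unset Strict Implicit. Unset Printing Implicit Defensive.
Import Order.TTheory GRing.Theory Num.Theory.
Local Open Scope ring_scope.

Section Posted.
Variables (R : realFieldType) (n : nat) (x : 'I_n -> R) (d : 'I_n -> nat).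
Hypothesis hx : forall i, 0 <= x i.
Hypothesis hd1 : forall i, (1 <= d i)%N.
Variables (p : R) (choose : 'I_n -> nat -> nat) (U : {set 'I_n}).
Hypothesis hp : 0 <= p.
Hypothesis hc : preferred_choice x d p choose.

Fixpoint rem_after (s : seq 'I_n) (r : nat) : nat :=
  match s with
  | [::] => r
  | i :: s' => if i \in U then rem_after s' (r - choose i r) else rem_after s' r
  end.

Lemma sm_val0 i : sm_val x d i 0 = 0.
Proof. by rewrite /sm_val; have := hd1 i; case: (d i). Qed.

Lemma sm_val_ge0 i q : 0 <= sm_val x d i q.
Proof. by rewrite /sm_val; case: ifP. Qed.

Lemma buy_ge i r : (choose i r)%:R * p <= sm_val x d i (choose i r).
Proof.
have [_ H] := hc i r; have := H 0%N (leq0n _).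
by rewrite sm_val0 mul0r subr0 subr_ge0.
Qed.

Lemma buy_ge2 i r : (d i <= r)%N -> x i - (d i)%:R * p <= sm_val x d i (choose i r).
Proof.
move=> hdr; have [_ H] := hc i r; have := H _ hdr.
rewrite /sm_val leqnn => h; apply: (le_trans h).
rewrite lerBlDr lerDl; apply: mulr_ge0 => //; exact: ler0n.
Qed.

Lemma rem_le s r : (rem_after s r <= r)%N.
Proof.
elim: s r => [|i s IH] r //=; case: ifP => _ //.
exact: leq_trans (IH _) (leq_subr _ _).
Qed.

Lemma pw_ge0 s r : 0 <= posted_welfare x d choose U s r.
Proof.
elim: s r => [|i s IH] r //=; case: ifP => _ //.
by apply: addr_ge0 => //; apply: sm_val_ge0.
Qed.

Lemma pw_rev s r : p * (r%:R - (rem_after s r)%:R) <= posted_welfare x d choose U s r.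
Proof.
elim: s r => [|i s IH] r /=; first by rewrite subrr mulr0.
case: ifP => _ //.
have hcr := (hc i r).1.
have := IH (r - choose i r)%N; rewrite natrB // => h.
have := buy_ge i r => h2.
lra.
Qed.

Lemma pw_win (P : pred 'I_n) s r :
  (forall i, P i -> (d i <= rem_after s r)%N) ->
  \sum_(i <- s | (i \in U) && P i) (x i - (d i)%:R * p)
    <= posted_welfare x d choose U s r.
Proof.
elim: s r => [|i s IH] r /=; first by rewrite big_nil.
rewrite big_cons; case hiU: (i \in U) => /= hP; last exact: IH.
have hcr := (hc i r).1.
case hPi: (P i).
  apply: lerD; last exact: IH.
apply: buy_ge2; apply: leq_trans (hP _ hPi) _.
  exact: leq_trans (rem_le _ _) (leq_subr _ _).
rewrite -[X in X <= _]add0r; apply: lerD; last exact: IH.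
exact: sm_val_ge0.
Qed.

End Posted.
From HB Require Import structures.
From mathcomp Require Import all_boot all_order all_algebra.
From mathcomp Require Import zify ring lra.
Set Implicit Arguments. Unset Strict Implicit. Unset Printing Implicit Defensive.
Import Order.TTheory GRing.Theory Num.Theory.
Local Open Scope ring_scope.

Section Moment.
Variables (R : realFieldType) (n : nat) (y : 'I_n -> R).

Definition sig (S : {set 'I_n}) (i : 'I_n) : R := if i \in S then 1 else -1.

Lemma sig_sum (S : {set 'I_n}) : \sum_(i in S) y i - (\sum_i y i) / 2 = (\sum_i y i * sig S i) / 2.
Proof.
rewrite [\sum_i y i](bigID (fun i => i \in S)) [\sum_i y i * _](bigID (fun i => i \in S)) /=.
rewrite [X in _ = (X + _) / 2](eq_bigr (fun i => y i)); last by move=> i hi; rewrite /sig hi mulr1.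
rewrite [X in _ = (_ + X) / 2](eq_bigr (fun i => - y i)); last first.
  by move=> i hi; rewrite /sig (negbTE hi) mulrN1.
rewrite sumrN; lra.
Qed.

Definition tog (i : 'I_n) (S : {set 'I_n}) := if i \in S then S :\ i else i |: S.

Lemma togK i : involutive (tog i).
Proof.
move=> S; rewrite /tog; case: (boolP (i \in S)) => hi.
  by rewrite !inE eqxx /= setD1K.
by rewrite setU11 setU1K.
Qed.

Lemma sig_pair i j : \sum_(S : {set 'I_n}) sig S i * sig S j =
  if i == j then #|{set 'I_n}|%:R else 0.
Proof.
case: eqP => [<-|/eqP hij].
  rewrite (eq_bigr (fun _ => 1)); last by move=> S _; rewrite /sig; case: ifP => _; lra.
  by rewrite sumr_const; congr (_%:R); apply: eq_card.
have hji : (j == i) = false by rewrite eq_sym (negbTE hij).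
set s := \sum_S _.
have : s = - s.
  rewrite {1}/s (reindex_inj (can_inj (togK i))) /s -sumrN; apply: eq_bigr => S _.
  rewrite /sig /tog; case: (boolP (i \in S)) => hi.
    rewrite !inE eqxx /= hji /=; case: ifP => _; lra.
  rewrite !inE eqxx /= hji /=; case: ifP => _; lra.
lra.
Qed.

Lemma second_moment :
  \sum_(S : {set 'I_n}) (\sum_(i in S) y i - (\sum_i y i) / 2) ^+ 2
  = #|{set 'I_n}|%:R / 4 * \sum_i y i ^+ 2.
Proof.
have e A : (A / 2) ^+ 2 = 4^-1 * (A * A) :> R.
  by rewrite expr2; field.
under eq_bigr do rewrite sig_sum e big_distrlr /=.
rewrite -mulr_sumr.
rewrite exchange_big /=.
under eq_bigr do rewrite exchange_big /=.
have inner i j : \sum_(S : {set 'I_n}) y i * sig S i * (y j * sig S j) =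
   y i * y j * (if i == j then #|{set 'I_n}|%:R else 0).
  rewrite -sig_pair mulr_sumr; apply: eq_bigr => S _; ring.
under eq_bigr do under eq_bigr do rewrite inner.
rewrite mulr_sumr [in RHS]mulr_sumr; apply: eq_bigr => i _.
rewrite (bigD1 i) //= eqxx big1 ?addr0; last first.
  by move=> j hj; rewrite eq_sym (negbTE hj) mulr0.
by rewrite expr2; field.
Qed.

End Moment.
Lemma quad (R : realFieldType) (V Y a O w : R) :
  0 < V -> 199/200 * V <= Y -> a <= O -> O <= V -> 0 <= w ->
  (O / 20 <= w \/ (Y - a) - O / 10 <= w) ->
  V * V / 100 - (a - Y / 2) ^+ 2 / 4 <= V * w.
Proof.
move=> hV hY haO hOV hw hor.
have hVw : 0 <= V * w by apply: mulr_ge0 => //; lra.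
have [hc|hc] := lerP (V / 5) `|a - Y / 2|.
  have : V / 5 * (V / 5) <= (a - Y / 2) ^+ 2.
    rewrite -(ger0_norm (sqr_ge0 (a - Y / 2))) normrX expr2; apply: ler_pM => //; lra.
  lra.
have [h1 h2] : - (V / 5) < a - Y / 2 /\ a - Y / 2 < V / 5.
  by move: hc; rewrite ltr_norml => /andP [].
have hsq : 0 <= (a - Y / 2) ^+ 2 by apply: sqr_ge0.
case: hor => hw'.
  have : V / 100 <= w by lra.
  move=> h; have : V * (V / 100) <= V * w by apply: ler_wpM2l => //; lra.
  lra.
have : V / 100 <= w by lra.
move=> h; have : V * (V / 100) <= V * w by apply: ler_wpM2l => //; lra.
lra.
Qed.

Theorem lemma3p5 (R : realFieldType) (n m : nat)
  (x : 'I_n -> R) (d : 'I_n -> nat)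
  (hx : forall i, 0 <= x i)
  (hd : forall i, (1 <= d i <= m)%N)
  (order : {set 'I_n} -> seq 'I_n)
  (horder : forall S, perm_eq (order S) (enum 'I_n))
  (choose : {set 'I_n} -> 'I_n -> nat -> nat)
  (hchoose : forall S, preferred_choice x d (price m x d S) (choose S)) :
  OPT m x d / 400 <= mech_expected_welfare m x d order choose.
Proof.
have hd1 : forall i, (0 < d i)%N by move=> i; case/andP: (hd i).
have hdm : forall i, (d i <= m)%N by move=> i; case/andP: (hd i).
have pw0 S : 0 <= posted_welfare x d (choose S) (~: S) (order S) m.
  exact: pw_ge0 hx _ _ _ _.
have gb0 : 0 <= grand_bundle_welfare m x d.
  rewrite /grand_bundle_welfare; elim/big_ind: _ => //.
    by move=> a b ha hb; rewrite le_max ha.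
  by move=> i _; exact: sm_val_ge0.
have E0 : 0 <= mech_expected_welfare m x d order choose.
  rewrite /mech_expected_welfare; apply: addr_ge0; apply: mulr_ge0; rewrite ?invr_ge0 ?ler0n //.
  apply: sumr_ge0 => S _; apply: mulr_ge0 => //; apply: exprn_ge0; by rewrite invr_ge0 ler0n.
have sT (F : 'I_n -> R) : \sum_(i in [set: 'I_n]) F i = \sum_i F i.
  by apply: eq_bigl => i; rewrite in_setT.
have sTn (F : 'I_n -> nat) : (\sum_(i in [set: 'I_n]) F i = \sum_i F i)%N.
  by apply: eq_bigl => i; rewrite in_setT.
have : OPT m x d = 0 \/ exists q : {ffun 'I_n -> 'I_m.+1},
    (\sum_i q i <= m)%N /\ OPT m x d = \sum_i sm_val x d i (q i).
  rewrite /OPT /opt_on; elim/big_ind: _.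
  - by left.
  - by move=> a b ha hb; case: (leP a b).
  - by move=> q hq; right; exists q; rewrite -sTn -sT.
case=> [->|[q [hq hV]]]; first by rewrite mul0r.
set V := OPT m x d in hV *.
have [V0|Vpos] := lerP V 0.
  by apply: le_trans E0; lra.
have [m0|m_gt0] := posnP m.
  exfalso; move: Vpos; rewrite hV big1 ?ltxx // => i _.
  by exfalso; have := hdm i; have := hd1 i; move: m0 => /eqP; lia.
case: (boolP [exists i, V / 200 <= x i]) => [/existsP [i0 hi0] | ].
  have hgb : sm_val x d i0 m <= grand_bundle_welfare m x d.
    exact: (le_bigmax 0 (fun i => sm_val x d i m) i0).
  move: hgb; rewrite /sm_val (hdm i0) => hgb.
  have hS : 0 <= \sum_(S : {set 'I_n}) (2^-1) ^+ n * posted_welfare x d (choose S) (~: S) (order S) m.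
    apply: sumr_ge0 => S _; apply: mulr_ge0 => //; apply: exprn_ge0; by rewrite invr_ge0 ler0n.
  rewrite /mech_expected_welfare; lra.
rewrite negb_exists => /forallP hsmall.
have hxs i : x i < V / 200 by rewrite ltNge; exact: hsmall i.
pose P i := (d i <= q i)%N && (2 * d i <= m)%N.
pose y i := if P i then x i else 0.
pose Y := \sum_i y i.
have y0 i : 0 <= y i by rewrite /y; case: ifP.
have yle i : y i <= V / 200 by rewrite /y; case: ifP => _; [exact: ltW | lra].
have ysm i : y i <= sm_val x d i (q i).
  rewrite /y /P /sm_val; case: (d i <= q i)%N => //=.
  by case: ifP.
have YV : Y <= V by rewrite hV; apply: ler_sum => i _; exact: ysm.
have VY : 199/200 * V <= Y.
  pose B := [pred i | (d i <= q i)%N && (m < 2 * d i)%N].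
  have cardB : (#|B| <= 1)%N.
    have h1 : (#|B| * m.+1 <= \sum_(i in B) 2 * d i)%N.
      rewrite -sum_nat_const; apply: leq_sum => i; rewrite inE => /andP [_ hi]; lia.
    have h2 : (\sum_(i in B) 2 * d i <= 2 * \sum_i q i)%N.
      rewrite big_distrr /= big_mkcond /=; apply: leq_sum => i _.
      by case: ifP => //; rewrite inE => /andP [hi _]; lia.
    nia.
  have eVY : V - Y = \sum_(i in B) x i.
    rewrite hV /Y -sumrB [RHS]big_mkcond /=; apply: eq_bigr => i _.
    rewrite /y /P /sm_val inE /=; case: (d i <= q i)%N => /=; last by rewrite subr0.
    by case: leqP => h /=; rewrite ?subrr ?subr0.
  have : \sum_(i in B) x i <= V / 200.
    apply: le_trans (_ : \sum_(i in B) (V / 200) <= _).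
      by apply: ler_sum => i _; exact: ltW (hxs i).
    rewrite sumr_const; move: cardB; case: #|B| => [|[|//]] _; rewrite ?mulr0n ?mulr1n; lra.
  lra.
have G1 (S : {set 'I_n}) : \sum_(i in S) y i <= opt_on m x d S.
  apply: le_trans (_ : \sum_(i in S) sm_val x d i (q i) <= _).
    by apply: ler_sum => i _; exact: ysm.
  have hqS : (\sum_(i in S) q i <= m)%N.
    apply: leq_trans hq; rewrite [X in (_ <= X)%N](bigID (mem S)) /=; exact: leq_addr.
  rewrite /opt_on.
  exact: (@le_bigmax_cond _ _ _ 0 q (fun q : {ffun 'I_n -> 'I_m.+1} => (\sum_(i in S) q i <= m)%N) (fun q : {ffun 'I_n -> 'I_m.+1} => \sum_(i in S) sm_val x d i (q i)) hqS).
have G2 (S : {set 'I_n}) : opt_on m x d S <= V.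
  rewrite /opt_on; apply: bigmax_le; first exact: ltW.
  move=> q' hq'.
  pose q'' := [ffun i => if i \in S then q' i else ord0] : {ffun 'I_n -> 'I_m.+1}.
  have e1 : \sum_(i in S) sm_val x d i (q' i) = \sum_(i in [set: 'I_n]) sm_val x d i (q'' i).
    rewrite sT big_mkcond /=; apply: eq_bigr => i _; rewrite ffunE; case: ifP => _ //.
    by rewrite /= sm_val0.
  have e2 : (\sum_(i in S) q' i = \sum_(i in [set: 'I_n]) q'' i)%N.
    rewrite sTn big_mkcond /=; apply: eq_bigr => i _; rewrite ffunE; case: ifP => _ //.
  rewrite e1 /V /OPT /opt_on.
  apply: (@le_bigmax_cond _ _ _ 0 q'' (fun q : {ffun 'I_n -> 'I_m.+1} => (\sum_(i in [set: 'I_n]) q i <= m)%N) (fun q : {ffun 'I_n -> 'I_m.+1} => \sum_(i in [set: 'I_n]) sm_val x d i (q i))).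
  by rewrite /= -e2.
have G0 (S : {set 'I_n}) : 0 <= opt_on m x d S.
  by apply: le_trans (G1 S); apply: sumr_ge0 => i _.
have split (S : {set 'I_n}) : \sum_(i in ~: S) y i = Y - \sum_(i in S) y i.
  rewrite /Y [X in _ = X - _](bigID (mem S)) /=.
  rewrite (eq_bigl (fun i => i \notin S)) /=; first lra.
  by move=> i; rewrite inE.
have G4 (S : {set 'I_n}) : opt_on m x d S / 20 <= posted_welfare x d (choose S) (~: S) (order S) m \/
   (\sum_(i in ~: S) y i) - opt_on m x d S / 10 <= posted_welfare x d (choose S) (~: S) (order S) m.
  have hp : 0 <= price m x d S.
    by rewrite /price; apply: divr_ge0 => //; apply: mulr_ge0 => //; exact: ler0n.
  have hm : (m%:R : R) != 0 by rewrite pnatr_eq0 -lt0n.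
  have hpm : price m x d S * m%:R = opt_on m x d S / 10.
    by rewrite /price; field.
  set fin := rem_after (choose S) (~: S) (order S) m.
  have [hfin|hfin] := leqP m (2 * fin).
    right.
    have hw := @pw_win _ _ _ _ hx _ _ (~: S) hp (hchoose S) P (order S) m.
    have hP : forall i, P i -> (d i <= fin)%N by move=> i /andP [_ h]; lia.
    move: (hw hP); rewrite (perm_big _ (horder S)) big_enum_cond /= => h.
    apply: le_trans h.
    rewrite sumrB -mulr_suml.
    have hd_sum : (\sum_(i in ~: S | P i) (d i)%:R : R) <= m%:R.
      rewrite -natr_sum ler_nat; apply: leq_trans hq; rewrite big_mkcond /=.
      apply: leq_sum => i _; case: ifP => [/andP [_ /andP [hi _]] | _] //.
    have ey : \sum_(i in ~: S | P i) x i = \sum_(i in ~: S) y i by rewrite big_mkcondr.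
    rewrite ey; have := ler_wpM2r hp hd_sum; lra.
  left.
  have := pw_rev hd1 (~: S) (hchoose S) (order S) m; rewrite -/fin => h.
  have : 0 <= price m x d S * (m%:R / 2 - fin%:R).
    apply: mulr_ge0 => //; rewrite subr_ge0 ler_pdivlMr ?ltr0n // -natrM ler_nat; lia.
  lra.
pose N : R := #|{set 'I_n}|%:R.
pose k : R := (2^-1) ^+ n.
have k0 : 0 <= k by apply: exprn_ge0; rewrite invr_ge0 ler0n.
have kN : k * N = 1.
  rewrite /k /N -cardsT -powersetT card_powerset cardsT card_ord natrX -exprMn mulVf ?expr1n // pnatr_eq0.
  by [].
have Hw (S : {set 'I_n}) : V * V / 100 - (\sum_(i in S) y i - Y / 2) ^+ 2 / 4 <=
    V * posted_welfare x d (choose S) (~: S) (order S) m.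
  apply: (quad Vpos VY (G1 S) (G2 S) (pw0 S)).
  by rewrite -split.
have T1 : V * V / 100 - (\sum_i y i ^+ 2) / 16 <=
    V * \sum_(S : {set 'I_n}) k * posted_welfare x d (choose S) (~: S) (order S) m.
  rewrite mulr_sumr.
  apply: le_trans (_ : \sum_(S : {set 'I_n}) k * (V * V / 100 - (\sum_(i in S) y i - Y / 2) ^+ 2 / 4) <= _); last first.
    apply: ler_sum => S _; rewrite [X in _ <= X]mulrCA; apply: ler_wpM2l => //.
  rewrite -mulr_sumr sumrB sumr_const -[X in k * (_ - X)]mulr_suml /Y second_moment.
  rewrite (_ : V * V / 100 *+ #|_| = V * V / 100 * N); last first.
    by rewrite -mulr_natr /N; congr (_ * _%:R); apply: eq_card.
  have -> : k * (V * V / 100 * N - N / 4 * (\sum_i y i ^+ 2) / 4) =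
     (k * N) * (V * V / 100 - (\sum_i y i ^+ 2) / 16) by field.
  by rewrite kN mul1r.
have T2 : \sum_i y i ^+ 2 <= V * V / 200.
  apply: le_trans (_ : \sum_i y i * (V / 200) <= _).
    by apply: ler_sum => i _; rewrite expr2; apply: ler_wpM2l (y0 i) _ _ (yle i).
  rewrite -mulr_suml -/Y.
  have h200 : 0 <= V / 200 by lra.
  have := ler_wpM2r h200 YV; lra.
have T3 : V / 200 <= \sum_(S : {set 'I_n}) k * posted_welfare x d (choose S) (~: S) (order S) m.
  have h : V * (V / 200) <= V * \sum_(S : {set 'I_n}) k * posted_welfare x d (choose S) (~: S) (order S) m.
    move: T1 T2; set s := \sum_(S : {set _}) _; set t := \sum_i y i ^+ 2 => T1 T2. nra.
  by rewrite ler_pM2l in h.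
rewrite /mech_expected_welfare; rewrite /k in T3; lra.
Qed.
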